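(* Let $m\ge 2$ and $k\ge 0$ be integers. The inner multiplicity $\gamma_{\lambda_k}(\vec 0)$ of the zero weight in the irrep $\lambda_k$ of $\mathrm{SU}(m)$ (i.e. the dimension of its zero-weight space, equivalently the number of semistandard Young tableaux of shape $(2k,k,\dots,k,0)$ with entries in $\{1,\dots,m\}$ in which every entry $1,\dots,m$ occurs equally often) is $$\gamma_{\lambda_k}(\vec 0)=\binom{k+m-2}{k}.$$
   Context: For $k\in\mathbb N$, $\lambda_k$ denotes the irreducible representation of $\mathrm{SU}(m)$ with Young diagram $(2k,k,\dots,k,0)$, i.e. first row of $2k$ boxes, rows $2,\dots,m-1$ of $k$ boxes each, and empty $m$-th row. Weights are taken with respect to the diagonal maximal torus of $\mathrm{SU}(m)$; the inner multiplicity of a weight is the dimension of the corresponding weight space. *)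

(* Defs.v *)
From mathcomp Require Import all_boot.
Set Implicit Arguments. Unset Strict Implicit. Unset Printing Implicit Defensive.

Definition rowlen (m k i : nat) : nat :=
  if i == 0 then 2 * k else if i < m.-1 then k else 0.

Definition cell (m k : nat) := ('I_m * 'I_(2 * k))%type.

Definition in_shape (m k : nat) (c : cell m k) : bool :=
  (c.2 : nat) < rowlen m k c.1.

(* A filling assigns to each cell an entry in 'I_m, where the value a
   represents the entry a+1 in {1,...,m}.  Cells outside the shape are
   normalised to 0 so that fillings correspond bijectively to tableaux. *)
Definition filling (m k : nat) := {ffun cell m k -> 'I_m}.

Definition is_ssyt (m k : nat) (T : filling m k) : bool :=
  [&& [forall c : cell m k, ~~ in_shape c ==> (val (T c) == 0)],
      [forall i : 'I_m, forall j1 : 'I_(2 * k), forall j2 : 'I_(2 * k),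
          (in_shape ((i, j2) : cell m k) && (j1 < j2)) ==>
          (val (T (i, j1)) <= val (T (i, j2)))] &
      [forall i1 : 'I_m, forall i2 : 'I_m, forall j : 'I_(2 * k),
          (in_shape ((i2, j) : cell m k) && (i1 < i2)) ==>
          (val (T (i1, j)) < val (T (i2, j)))]].

(* Zero weight for SU(m): every entry 1..m occurs equally often, i.e.
   exactly |lambda_k|/m = k times. *)
Definition zero_content (m k : nat) (T : filling m k) : bool :=
  [forall a : 'I_m, #|[set c : cell m k | in_shape c && (T c == a)]| == k].

(* Inner multiplicity of the zero weight in lambda_k = Kostka number
   K_{lambda_k, (k,...,k)}. *)
Definition zero_weight_mult (m k : nat) : nat :=
  #|[set T : filling m k | is_ssyt T && zero_content T]|.

(* Main.v *)
Require Import Defs.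
From mathcomp Require Import all_boot zify.
Set Implicit Arguments. Unset Strict Implicit. Unset Printing Implicit Defensive.

Lemma chain_bound N (f : nat -> nat) :
  (forall i, i.+1 < N -> f i < f i.+1) -> (forall i, i < N -> f i <= N) ->
  forall i, i < N -> i <= f i <= i.+1.
Proof.
move=> Hc Hb.
have H : forall d i, i + d < N -> f i + d <= f (i + d).
  elim=> [|d IH] i Hi; first by rewrite !addn0.
  have H1 := IH i (ltac:(lia)).
  have H2 := Hc (i + d) (ltac:(lia)).
  rewrite !addnS; lia.
move=> i Hi; apply/andP; split.
  have := H i 0; rewrite add0n => /(_ Hi); lia.
have := H (N - i.+1) i (ltac:(lia)).
have -> : i + (N - i.+1) = N.-1 by lia.
have := Hb N.-1 (ltac:(lia)). lia.
Qed.

Lemma col_struct N (f : nat -> nat) :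
  (forall i, i < N -> i <= f i <= i.+1) -> (forall i, i.+1 < N -> f i < f i.+1) ->
  exists2 x, x <= N & forall i, i < N -> f i = i + (x <= i).
Proof.
elim: N => [|N IH] Hb Hc; first by exists 0.
have [x xN Hx] : exists2 x, x <= N & forall i, i < N -> f i = i + (x <= i).
  apply: IH => i Hi; [apply: Hb; lia| apply: Hc; lia].
have := Hb N (ltnSn _) => /andP [H1 H2].
case E : (f N == N).
  exists N.+1 => // i Hi.
  have [iN|iN] : i < N \/ i = N by lia.
  2: by rewrite iN (eqP E) ltnn addn0.
  rewrite Hx //; case: (leqP x i) => xi; last by case: leqP => //; lia.
  exfalso. have hN : N.-1 < N by lia. have hN' : N.-1.+1 < N.+1 by lia.
  have HN1 := Hx N.-1 hN. have := Hc N.-1 hN'.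
  have -> : N.-1.+1 = N by lia. rewrite (eqP E) HN1.
  have -> : x <= N.-1 by lia. lia.
exists x; first by lia.
move=> i Hi; have [iN|iN] : i < N \/ i = N by lia.
  by apply: Hx.
rewrite iN xN. move/eqP: E. lia.
Qed.

Definition Tn n k (T : filling n.+2 k) (i j : nat) : nat :=
  match (insub i : option 'I_n.+2), (insub j : option 'I_(2 * k)) with
  | Some i', Some j' => val (T (i', j'))
  | _, _ => 0 end.

Lemma TnE n k (T : filling n.+2 k) (i : 'I_n.+2) (j : 'I_(2 * k)) :
  Tn T i j = T (i, j).
Proof. by rewrite /Tn !valK. Qed.

Lemma Tn_le n k (T : filling n.+2 k) i j : Tn T i j <= n.+1.
Proof.
rewrite /Tn; destruct (insub i : option 'I_n.+2) as [i'|] => //.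
destruct (insub j : option 'I_(2 * k)) as [j'|] => //.
exact: (ltn_ord (T (i', j'))).
Qed.

Definition shp n k (i j : nat) : bool :=
  ((j < k) && (i < n.+1)) || ((k <= j) && (j < 2 * k) && (i == 0)).

Lemma shpE n k (i : 'I_n.+2) (j : 'I_(2 * k)) :
  in_shape ((i, j) : cell n.+2 k) = shp n k i j.
Proof.
rewrite /in_shape /rowlen /shp /=. have := ltn_ord j.
case: eqP => [->|ne] /=; try lia.
case: ifP => /=; rewrite ?andbF ?orbF ?andbT ?andbF; lia.
Qed.

Lemma colsum N x a : \sum_(0 <= i < N) (i + (x <= i) == a) = ((a < N) && (a < x)) + ((x < a) && (a <= N)).
Proof.
elim: N => [|N IH]; first by rewrite big_nil; lia.
rewrite big_nat_recr //= IH. lia.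
Qed.

Lemma count_val n k (T : filling n.+2 k) (xf : nat -> nat) :
  (forall j, j < k -> xf j <= n.+1) ->
  (forall i j, j < k -> i < n.+1 -> Tn T i j = i + (xf j <= i)) ->
  forall a : 'I_n.+2, #|[set c : cell n.+2 k | in_shape c && (T c == a)]| =
    \sum_(0 <= j < k) (val a != xf j) + \sum_(k <= j < 2 * k) (Tn T 0 j == a).
Proof.
move=> Hx HT a.
have -> : #|[set c : cell n.+2 k | in_shape c && (T c == a)]| =
   \sum_(c : cell n.+2 k) (in_shape c && (T c == a)).
  rewrite -sum1_card big_mkcond /=; apply: eq_bigr => c _; rewrite inE.
  by case: (_ && _).
transitivity (\sum_(i < n.+2) \sum_(j < 2 * k) (shp n k i j && (Tn T i j == a))).
  rewrite pair_big /=; apply: eq_bigr => [[i j]] _; by rewrite /= shpE TnE.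
rewrite exchange_big /=.
rewrite -(big_mkord xpredT (fun j => \sum_(i < n.+2) (shp n k i j && (Tn T i j == a)))).
rewrite (@big_cat_nat _ _ _ k) //=; last by lia.
congr (_ + _); apply: eq_big_nat => j /andP[hj1 hj2].
  rewrite -(big_mkord xpredT (fun i => nat_of_bool (shp n k i j && (Tn T i j == a)))).
  rewrite big_nat_recr //= {2}/shp hj2 /= ltnn /= andbF addn0.
  rewrite (eq_big_nat _ _ (F2 := fun i => nat_of_bool (i + (xf j <= i) == a))); last first.
    by move=> i /andP[_ hi]; rewrite /shp hj2 hi /= HT.
  rewrite colsum. have := Hx j hj2. have := ltn_ord a. lia.
rewrite big_ord_recl /= big1 ?addn0.
  by rewrite /shp /= hj1 hj2 eqxx /= orbT.
move=> i _; rewrite /shp /= /bump /= add1n.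
have -> : (j < k) = false by lia.
by rewrite /= andbF.
Qed.

Definition tv n k (t : k.-tuple 'I_n.+1) j := nth 0 (map val t) j.
Definition xv n k (t : k.-tuple 'I_n.+1) j := tv t (k - j.+1) + 1.
Definition Fval n k (t : k.-tuple 'I_n.+1) i j :=
  if (j < k) && (i < n.+1) then i + (xv t j <= i)
  else if (k <= j) && (i == 0) then tv t (j - k) + 1 else 0.
Definition F n k (t : k.-tuple 'I_n.+1) : filling n.+2 k :=
  [ffun c : cell n.+2 k => inord (Fval t c.1 c.2)].

Lemma tv_le n k (t : k.-tuple 'I_n.+1) j : tv t j <= n.
Proof.
rewrite /tv; case: (ltnP j k) => hj.
  by rewrite (nth_map ord0) ?size_tuple // -ltnS ltn_ord.
by rewrite nth_default // size_map size_tuple.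
Qed.

Lemma Fval_le n k (t : k.-tuple 'I_n.+1) i j : Fval t i j <= n.+1.
Proof.
have := tv_le t (j - k); have := tv_le t (k - j.+1).
rewrite /Fval /xv; case: ifP => h1; first lia.
case: ifP => h2; lia.
Qed.

Lemma TnF n k (t : k.-tuple 'I_n.+1) i j : i < n.+2 -> j < 2 * k ->
  Tn (F t) i j = Fval t i j.
Proof.
move=> hi hj; have := TnE (F t) (Ordinal hi) (Ordinal hj).
by rewrite ffunE /= inordK // ltnS Fval_le.
Qed.

Lemma tv_mono n k (t : k.-tuple 'I_n.+1) a b : sorted leq (map val t) ->
  a <= b -> b < k -> tv t a <= tv t b.
Proof.
move=> st ab bk; apply: (sorted_leq_nth leq_trans leqnn 0 st) => //;
  rewrite inE size_map size_tuple //; lia.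
Qed.

Lemma F_inj n k : injective (@F n k).
Proof.
move=> t1 t2 E.
have H : forall j, j < k -> tv t1 j = tv t2 j.
  move=> j hj; have := TnF t1 (ltn0Sn n.+1) (_ : k + j < 2 * k).
  have := TnF t2 (ltn0Sn n.+1) (_ : k + j < 2 * k).
  have hj' : k + j < 2 * k by lia.
  move=> /(_ hj') E2 /(_ hj') E1. rewrite E in E1. rewrite E1 in E2.
  move: E2; rewrite /Fval.
  have -> : (k + j < k) = false by lia.
  rewrite leq_addr /= addKn. lia.
apply: val_inj; apply: (inj_map val_inj); apply: (eq_from_nth (x0 := 0)).
  by rewrite !size_map !size_tuple.
by move=> j; rewrite size_map size_tuple; apply: H.
Qed.

Lemma F_valid n k (t : k.-tuple 'I_n.+1) : sorted leq (map val t) ->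
  is_ssyt (F t) && zero_content (F t).
Proof.
move=> st.
have Fv : forall (i : 'I_n.+2) (j : 'I_(2 * k)), val (F t (i, j)) = Fval t i j.
  by move=> i j; rewrite ffunE /= inordK // ltnS Fval_le.
have xdec : forall j1 j2, j1 < j2 -> j2 < k -> xv t j2 <= xv t j1.
  move=> j1 j2 h1 h2; rewrite /xv leq_add2r; apply: tv_mono => //; lia.
have xpos : forall j, 1 <= xv t j by move=> j; rewrite /xv addn1.
have rmono : forall j1 j2, k <= j1 -> j1 <= j2 -> j2 < 2 * k ->
    tv t (j1 - k) <= tv t (j2 - k).
  move=> j1 j2 h1 h2 h3; apply: tv_mono => //; lia.
apply/andP; split.
  apply/and3P; split.
  - apply/forallP => [[i j]]; apply/implyP; rewrite shpE Fv /= /Fval /shp.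
    have := ltn_ord j. case: ifP => h1; first lia. case: ifP => h2; lia.
  - apply/forallP => i; apply/forallP => j1; apply/forallP => j2.
    apply/implyP => /andP[]; rewrite shpE !Fv /Fval /shp => hs hlt.
    have := xdec j1 j2; have := rmono j1 j2; have := xpos j1; have := xpos j2.
    have := ltn_ord j2.
    case: ifP => h1; case: ifP => h2; try case: ifP => h3; try case: ifP => h4; lia.
  - apply/forallP => i1; apply/forallP => i2; apply/forallP => j.
    apply/implyP => /andP[]; rewrite shpE !Fv /Fval /shp => hs hlt.
    have := ltn_ord j.
    case: ifP => h1; case: ifP => h2; try case: ifP => h3; try case: ifP => h4; lia.
apply/forallP => a; apply/eqP.
rewrite (@count_val n k (F t) (xv t)); first last.
- move=> i j hj hi; rewrite TnF; [|lia|lia].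
  by rewrite /Fval hj hi.
- by move=> j _; rewrite /xv addn1 ltnS tv_le.
rewrite (eq_big_nat _ _ (F1 := fun j => nat_of_bool (Tn (F t) 0 j == a))
           (F2 := fun j => nat_of_bool (tv t (j - k) + 1 == a))); last first.
  move=> j /andP[h1 h2]; rewrite TnF //.
  rewrite /Fval. have -> : (j < k) = false by lia. by rewrite h1.
have E := big_addn 0 (2 * k) k xpredT (fun j => nat_of_bool (tv t (j - k) + 1 == a)).
rewrite add0n in E; rewrite E.
have -> : 2 * k - k = k by lia.
rewrite (eq_big_nat _ _ (F1 := fun j => nat_of_bool (tv t (j + k - k) + 1 == a))
   (F2 := fun j => nat_of_bool (tv t j + 1 == a))); last first.
  by move=> j _; rewrite addnK.
rewrite big_nat_rev /= -big_split /=.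
rewrite (eq_big_nat _ _ (F2 := fun j => 1)); last first.
  move=> j /andP[_ hj]; rewrite add0n /xv.
  have -> : k - (k - j.+1).+1 = j by lia.
  rewrite eq_sym. by case: (_ == _).
by rewrite sum_nat_const_nat muln1 subn0.
Qed.

Lemma fchoice K (P : nat -> nat -> Prop) :
  (forall j, j < K -> exists x, P j x) -> exists f, forall j, j < K -> P j (f j).
Proof.
elim: K => [|K IH] H; first by exists (fun _ => 0).
have [f Hf] := IH (fun j hj => H j (ltnW (leq_trans hj (leqnn _)))).
have [x Hx] := H K (ltnSn K).
exists (fun j => if j == K then x else f j) => j hj.
case: eqP => [->//|ne]; apply: Hf; lia.
Qed.

Lemma count_map_seq (f : nat -> nat) a s :
  count_mem a [seq f j | j <- s] = \sum_(j <- s) (f j == a).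
Proof.
elim: s => [|x s IH]; first by rewrite big_nil.
by rewrite big_cons /= IH eq_sym.
Qed.

Lemma count_map_iota (f : nat -> nat) a k :
  count_mem a [seq f j | j <- iota 0 k] = \sum_(0 <= j < k) (f j == a).
Proof. by rewrite count_map_seq /index_iota subn0. Qed.

Lemma nth_map_iota (f : nat -> nat) k j : j < k ->
  nth 0 [seq f i | i <- iota 0 k] j = f j.
Proof. by move=> hj; rewrite (nth_map 0) ?size_iota ?nth_iota. Qed.

Lemma valid_F n k (T : filling n.+2 k) : is_ssyt T && zero_content T ->
  exists2 t : k.-tuple 'I_n.+1, sorted leq (map val t) & T = F t.
Proof.
case/andP => /and3P[HZ HR HC] HZC.
have shp_b : forall i j, shp n k i j -> (i < n.+2) && (j < 2 * k).
  by move=> i j; rewrite /shp; lia.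
have Z' : forall i j, i < n.+2 -> j < 2 * k -> ~~ shp n k i j -> Tn T i j = 0.
  move=> i j hi hj hs.
  have := forallP HZ (Ordinal hi, Ordinal hj); rewrite shpE /= (negbTE hs) /=.
  by move/eqP; rewrite -(TnE T (Ordinal hi) (Ordinal hj)).
have R' : forall i j1 j2, shp n k i j2 -> j1 < j2 -> Tn T i j1 <= Tn T i j2.
  move=> i j1 j2 hs hlt; have /andP[hi hj2] := shp_b _ _ hs.
  have hj1 : j1 < 2 * k by lia.
  have := implyP (forallP (forallP (forallP HR (Ordinal hi)) (Ordinal hj1)) (Ordinal hj2)).
  rewrite shpE /= hs hlt /= => /(_ isT).
  by rewrite -(TnE T (Ordinal hi) (Ordinal hj1)) -(TnE T (Ordinal hi) (Ordinal hj2)).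
have C' : forall i1 i2 j, shp n k i2 j -> i1 < i2 -> Tn T i1 j < Tn T i2 j.
  move=> i1 i2 j hs hlt; have /andP[hi2 hj] := shp_b _ _ hs.
  have hi1 : i1 < n.+2 by lia.
  have := implyP (forallP (forallP (forallP HC (Ordinal hi1)) (Ordinal hi2)) (Ordinal hj)).
  rewrite shpE /= hs hlt /= => /(_ isT).
  by rewrite -(TnE T (Ordinal hi1) (Ordinal hj)) -(TnE T (Ordinal hi2) (Ordinal hj)).
have [xf Hxf] : exists xf, forall j, j < k ->
    xf j <= n.+1 /\ forall i, i < n.+1 -> Tn T i j = i + (xf j <= i).
  apply: (@fchoice k (fun j x => x <= n.+1 /\ forall i, i < n.+1 -> Tn T i j = i + (x <= i))) => j hj.
  have consec : forall i, i.+1 < n.+1 -> Tn T i j < Tn T i.+1 j.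
    by move=> i hi; apply: C' => //; rewrite /shp hj hi.
  have [x hx1 hx2] := @col_struct n.+1 (fun i => Tn T i j)
     (chain_bound consec (fun i _ => Tn_le T i j)) consec.
  by exists x.
have xle : forall j, j < k -> xf j <= n.+1 by move=> j hj; case: (Hxf j hj).
have xfE : forall i j, j < k -> i < n.+1 -> Tn T i j = i + (xf j <= i).
  by move=> i j hj; case: (Hxf j hj) => _ H; apply: H.
have xdec : forall j1 j2, j1 < j2 -> j2 < k -> xf j2 <= xf j1.
  move=> j1 j2 h1 h2; rewrite leqNgt; apply/negP => hlt.
  have hi : xf j1 < n.+1 by have := xle j2 h2; lia.
  have hs : shp n k (xf j1) j2 by rewrite /shp h2 hi.
  have := R' (xf j1) j1 j2 hs h1.
  rewrite (xfE _ j1) ?(xfE _ j2) //; last by lia.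
  lia.
have cnt : forall a, \sum_(0 <= j < k) (Tn T 0 (k + j) == a) =
                     \sum_(0 <= j < k) (xf (k - j.+1) == a).
  move=> a.
  have -> : \sum_(0 <= j < k) (xf (k - j.+1) == a) = \sum_(0 <= j < k) (xf j == a).
    rewrite [RHS]big_nat_rev; apply: eq_big_nat => j _; by rewrite add0n.
  have -> : \sum_(0 <= j < k) (Tn T 0 (k + j) == a) =
            \sum_(k <= j < 2 * k) (Tn T 0 j == a).
    have E := big_addn 0 (2 * k) k xpredT (fun j => nat_of_bool (Tn T 0 j == a)).
    rewrite add0n in E; rewrite E.
    have -> : 2 * k - k = k by lia.
    by apply: eq_big_nat => j _; rewrite addnC.
  case: (ltnP a n.+2) => ha; last first.
    rewrite (eq_big_nat _ _ (F1 := fun j => nat_of_bool (Tn T 0 j == a)) (F2 := fun _ => 0)); last first.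
      move=> j _; have := Tn_le T 0 j; case: eqP => // ->; lia.
    rewrite (eq_big_nat _ _ (F1 := fun j => nat_of_bool (xf j == a)) (F2 := fun _ => 0)); last first.
      move=> j /andP[_ hj]; have := xle j hj; case: eqP => // ->; lia.
    by rewrite !sum_nat_const_nat !muln0.
  have := forallP HZC (Ordinal ha); move/eqP.
  rewrite (@count_val n k T xf xle xfE) /=.
  have AB : \sum_(0 <= j < k) (a != xf j) + \sum_(0 <= j < k) (xf j == a) = k.
    rewrite -big_split /= (eq_big_nat _ _ (F2 := fun _ => 1)).
      by rewrite sum_nat_const_nat subn0 muln1.
    by move=> j _; rewrite eq_sym; case: (_ == _).
  lia.
pose ys := [seq Tn T 0 (k + j) | j <- iota 0 k].
pose xs := [seq xf (k - j.+1) | j <- iota 0 k].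
have sy : sorted leq ys.
  apply/(sortedP 0) => j; rewrite size_map size_iota => hj.
  rewrite !nth_map_iota; [|lia|lia].
  apply: R'; last by lia.
  rewrite /shp; lia.
have sx : sorted leq xs.
  apply/(sortedP 0) => l; rewrite size_map size_iota => hl.
  rewrite !nth_map_iota; [|lia|lia].
  apply: xdec; lia.
have pe : perm_eq ys xs.
  rewrite /perm_eq; apply/allP => a _ /=.
  by rewrite !count_map_iota cnt.
have exy : ys = xs := sorted_eq leq_trans anti_leq sy sx pe.
have yx : forall j, j < k -> Tn T 0 (k + j) = xf (k - j.+1).
  move=> j hj; have := congr1 (fun s => nth 0 s j) exy.
  by rewrite /= !nth_map_iota.
have xpos : forall j, j < k -> 0 < xf j.
  move=> j hj.
  have hs : shp n k 0 k by rewrite /shp; lia.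
  have := R' 0 k.-1 k hs (ltac:(lia)).
  have := yx 0 (ltac:(lia)); rewrite addn0 => ->.
  rewrite xfE //; last by lia.
  have : j <= k.-1 by lia.
  rewrite leq_eqVlt => /orP[/eqP->|hlt]; first by rewrite subn1; lia.
  have := xdec j k.-1 hlt (ltac:(lia)). rewrite subn1. lia.
pose s := [seq (inord (Tn T 0 (k + j)).-1 : 'I_n.+1) | j <- iota 0 k].
have sz : size s == k by rewrite size_map size_iota.
pose t := Tuple sz.
have tvt : forall j, j < k -> tv t j = (Tn T 0 (k + j)).-1.
  move=> j hj; rewrite /tv (nth_map ord0) ?size_tuple //= (nth_map 0) ?size_iota //.
  rewrite nth_iota // add0n inordK //; have := Tn_le T 0 (k + j); lia.
exists t.
  apply/(sortedP 0) => j; rewrite size_map size_tuple => hj.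
  rewrite -/(tv t j) -/(tv t j.+1) !tvt; [|lia|lia].
  have : Tn T 0 (k + j) <= Tn T 0 (k + j.+1) by apply: R'; rewrite /shp; lia.
  lia.
apply/ffunP => [[i j]]; apply: val_inj.
rewrite ffunE /= inordK ?ltnS ?Fval_le // -TnE /Fval.
have hj2 := ltn_ord j.
case: ifP => h1.
  move/andP: h1 => [hj hi]; rewrite xfE // /xv tvt; last by lia.
  rewrite yx; last by lia.
  have -> : k - (k - j.+1).+1 = j by lia.
  have := xpos j hj. lia.
case: ifP => h2.
  move/andP: h2 => [hj /eqP hi]; rewrite hi tvt; last by lia.
  have -> : k + (j - k) = j by lia.
  have := yx (j - k) (ltac:(lia)); have -> : k + (j - k) = j by lia.
  move=> ->; have := xpos (k - (j - k).+1) (ltac:(lia)). lia.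
apply: Z' => //; rewrite /shp h1 /=. move: h2. lia.
Qed.

Theorem lemmaT3 (m k : nat) (hm : 2 <= m) :
  zero_weight_mult m k = 'C(k + m - 2, k).
Proof.
case: m hm => [|[|n]] // _.
rewrite /zero_weight_mult.
have -> : [set T : filling n.+2 k | is_ssyt T && zero_content T] =
    (@F n k) @: [set t : k.-tuple 'I_n.+1 | sorted leq (map val t)].
  apply/setP => T; rewrite inE; apply/idP/imsetP.
    by move/valid_F => [t st ->]; exists t => //; rewrite inE.
  by case=> t; rewrite inE => st ->; apply: F_valid.
rewrite card_imset; last exact: F_inj.
rewrite card_sorted_tuples. congr 'C(_, _); lia.
Qed.
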